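(* Let $\Theta$ be a quantum superchannel from $\mathrm{CPTP}(A\to B)$ to $\mathrm{CPTP}(A'\to B)$ written in standard form $\Theta[\mathcal{N}]=\mathcal{E}^{RB\to B}\circ\mathcal{N}^{A\to B}\circ\mathcal{V}^{A'\to RA}$. The following are equivalent: (1) $\Theta$ is completely uniformity-preserving; (2) the channel $\Theta\otimes\mathbb{1}^{(\mathbb{C}\to C)}\big[\mathbf{u}^B\otimes\mathrm{id}^{A\to C}\big]\in\mathrm{CPTP}(A'\to BC)$, where $C$ is a replica of $A$ and $\mathbf{u}^B\otimes\mathrm{id}^{A\to C}$ is the channel $\rho^A\mapsto\mathbf{u}^B\otimes\rho^C$, is marginally uniform with respect to $B$; (3) $\Theta$ is a mixing superchannel, i.e. $\mathcal{E}^{RB\to B}$ is conditionally unital.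
   Context: Systems are finite-dimensional; $\mathrm{CPTP}(A\to B)$ is the set of quantum channels; $\mathbf{u}^B=I^B/|B|$. Every superchannel can be realized as $\Theta[\mathcal{N}]=\mathcal{E}^{RB\to B}\circ\mathcal{N}^{A\to B}\circ\mathcal{V}^{A'\to RA}$ with an auxiliary system $R$, an isometry channel $\mathcal{V}$ and a channel $\mathcal{E}$ (identity on systems not acted upon); it is in standard form if $|R|$ is the minimal possible dimension among such realizations. For systems $C_0,C_1$, $\Theta\otimes\mathbb{1}^{(C_0\to C_1)}$ acts on $\mathcal{N}^{AC_0\to BC_1}$ by $\mathcal{E}^{RB\to B}\circ\mathcal{N}^{AC_0\to BC_1}\circ\mathcal{V}^{A'\to RA}$. A channel $\mathcal{N}\in\mathrm{CPTP}(AC_0\to BC_1)$ is marginally uniform with respect to $B$ if $\mathcal{N}=\mathbf{u}^B\otimes\mathcal{N}^{AC_0\to C_1}$ where $\mathcal{N}^{AC_0\to C_1}=\mathrm{Tr}_B\circ\mathcal{N}$. $\Theta$ is completely uniformity-preserving if for all systems $C_0,C_1$ and every marginally uniform $\mathcal{N}^{AC_0\to BC_1}$, $\Theta\otimes\mathbb{1}^{(C_0\to C_1)}[\mathcal{N}]$ is marginally uniform with respect to $B$. A channel $\mathcal{E}\in\mathrm{CPTP}(RB\to B)$ is conditionally unital if for every density matrix $\tau^R$ the channel $\omega^B\mapsto\mathcal{E}(\tau^R\otimes\omega^B)$ is unital, i.e. $\mathcal{E}(\tau^R\otimes\mathbf{u}^B)=\mathbf{u}^B$. *)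

(* Defs.v *)
(* Finite-dimensional quantum systems are modelled by finite
   types X (the index set of an orthonormal basis); operators on X are
   X -> X -> C with C an arbitrary numClosedFieldType (e.g. complex numbers). *)
From mathcomp Require Import all_boot all_order all_algebra.
Set Implicit Arguments. Unset Strict Implicit. Unset Printing Implicit Defensive.
Import Order.TTheory GRing.Theory Num.Theory.
Local Open Scope ring_scope.

Section Quantum.
Variable C : numClosedFieldType.

Definition op (X : finType) := X -> X -> C.

Definition tr (X : finType) (M : op X) : C := \sum_x M x x.

Definition psd (X : finType) (M : op X) : Prop :=
  forall v : X -> C, 0 <= \sum_x \sum_y (v x)^* * M x y * v y.

Definition density (X : finType) (M : op X) : Prop := psd M /\ tr M = 1.

Definition opT (X Y : finType) (M : op X) (N : op Y) : op (X * Y)%type :=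
  fun p q => M p.1 q.1 * N p.2 q.2.

Definition unif (X : finType) : op X := fun x y => (x == y)%:R / #|X|%:R.

Definition ptrL (X Y : finType) (M : op (X * Y)%type) : op Y :=
  fun y y' => \sum_x M (x, y) (x, y').

Definition is_linear (X Y : finType) (f : op X -> op Y) : Prop :=
  forall (a : C) (M N : op X) x y,
    f (fun u v => a * M u v + N u v) x y = a * f M x y + f N x y.

Definition idtens (K X Y : finType) (f : op X -> op Y) : op (K * X)%type -> op (K * Y)%type :=
  fun M p q => f (fun x x' => M (p.1, x) (q.1, x')) p.2 q.2.
Definition tensid (K X Y : finType) (f : op X -> op Y) : op (X * K)%type -> op (Y * K)%type :=
  fun M p q => f (fun x x' => M (x, p.2) (x', q.2)) p.1 q.1.

Definition CP (X Y : finType) (f : op X -> op Y) : Prop :=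
  forall (K : finType) (M : op (K * X)%type), psd M -> psd (idtens f M).
Definition TP (X Y : finType) (f : op X -> op Y) : Prop :=
  forall M : op X, tr (f M) = tr M.

Definition channel (X Y : finType) (f : op X -> op Y) : Prop :=
  [/\ is_linear f, CP f & TP f].

Definition is_isometry (X Y : finType) (V : Y -> X -> C) : Prop :=
  forall x1 x2, \sum_y (V y x1)^* * V y x2 = (x1 == x2)%:R.
Definition isoch (X Y : finType) (V : Y -> X -> C) : op X -> op Y :=
  fun M p q => \sum_x1 \sum_x2 V p x1 * M x1 x2 * (V q x2)^*.

Definition assocLR (X Y Z : finType) (M : op ((X * Y) * Z)%type) : op (X * (Y * Z))%type :=
  fun p q => M ((p.1, p.2.1), p.2.2) ((q.1, q.2.1), q.2.2).
Definition assocRL (X Y Z : finType) (M : op (X * (Y * Z))%type) : op ((X * Y) * Z)%type :=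
  fun p q => M (p.1.1, (p.1.2, p.2)) (q.1.1, (q.1.2, q.2)).

Section Super.
Variables (A B A' R : finType).

Definition superch (V : (R * A)%type -> A' -> C) (E : op (R * B)%type -> op B)
  (N : op A -> op B) : op A' -> op B :=
  fun M => E (idtens N (isoch V M)).

(* (Theta (x) 1^{C0->C1})[N] = E o N^{AC0->BC1} o V *)
Definition superext (V : (R * A)%type -> A' -> C) (E : op (R * B)%type -> op B)
  (C0 C1 : finType) (N : op (A * C0)%type -> op (B * C1)%type) : op (A' * C0)%type -> op (B * C1)%type :=
  fun M => tensid E (assocRL (idtens N (assocLR (tensid (isoch V) M)))).

End Super.

Definition marg_unif (B X Y : finType) (N : op X -> op (B * Y)%type) : Prop :=
  forall M p q, N M p q = opT (@unif B) (ptrL (N M)) p q.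

(* standard form: |R| minimal among all realizations of the same superchannel
   (equality as maps on all linear maps A -> B) *)
Definition std_form (A B A' R : finType) (V : (R * A)%type -> A' -> C)
  (E : op (R * B)%type -> op B) : Prop :=
  forall (R' : finType) (V' : (R' * A)%type -> A' -> C) (E' : op (R' * B)%type -> op B),
    is_isometry V' -> channel E' ->
    (forall N : op A -> op B, is_linear N ->
       forall M x y, superch V' E' N M x y = superch V E N M x y) ->
    (#|R| <= #|R'|)%N.

Definition compl_unif_pres (A B A' R : finType) (V : (R * A)%type -> A' -> C)
  (E : op (R * B)%type -> op B) : Prop :=
  forall (C0 C1 : finType) (N : op (A * C0)%type -> op (B * C1)%type),
    channel N -> marg_unif N -> marg_unif (superext V E N).

(* the channel rho^{A (x) C} |-> u^B (x) rho^C with C a replica of A and the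
   trivial input system C0 = unit *)
Definition unif_id (A B : finType) : op (A * unit)%type -> op (B * A)%type :=
  fun M => opT (@unif B) (fun a a' => M (a, tt) (a', tt)).

Definition cond_unital (R B : finType) (E : op (R * B)%type -> op B) : Prop :=
  forall tau : op R, density tau ->
    forall b b', E (opT tau (@unif B)) b b' = @unif B b b'.

End Quantum.

(* Main.v *)
Require Import Defs.
From mathcomp Require Import all_boot all_order all_algebra ring.
From Stdlib Require Import FunctionalExtensionality.
Import Order.TTheory GRing.Theory Num.Theory.
Set Implicit Arguments. Unset Strict Implicit. Unset Printing Implicit Defensive.
Local Open Scope ring_scope.



Section S.
Variable C : numClosedFieldType.

Lemma fext2 (X : Type) (f g : X -> X -> C) : (forall u v, f u v = g u v) -> f = g.
Proof. by move=> H; apply: functional_extensionality => u; apply: functional_extensionality. Qed.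

Lemma cK (x : C) : x^*^* = x. Proof. exact: conjCK. Qed.

Definition linF (X : finType) (h : op C X -> C) :=
  forall a (M N : op C X), h (fun u v => a * M u v + N u v) = a * h M + h N.

Lemma linF_of (X Y : finType) (f : op C X -> op C Y) : is_linear f -> forall y y', linF (fun M => f M y y').
Proof. by move=> Hf y y' a M N; rewrite Hf. Qed.

Lemma linF0 (X : finType) (h : op C X -> C) : linF h -> h (fun _ _ => 0) = 0.
Proof.
move=> Hh; have := Hh 1 (fun _ _ => 0) (fun _ _ => 0).
rewrite (_ : (fun _ _ => 1 * 0 + 0) = (fun _ _ => 0)); last by apply: fext2 => u v; rewrite mulr0 addr0.
move/(congr1 (fun z => z - h (fun _ _ => 0))); rewrite mul1r addrK subrr. move=> HH. by rewrite {2}HH.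
Qed.

Lemma linF_scale (X : finType) (h : op C X -> C) a (M : op C X) : linF h -> h (fun u v => a * M u v) = a * h M.
Proof.
move=> Hh; have := Hh a M (fun _ _ => 0); rewrite linF0 // addr0 => <-.
by congr h; apply: fext2 => u v; rewrite addr0.
Qed.

Lemma linF_add (X : finType) (h : op C X -> C) (M N : op C X) : linF h -> h (fun u v => M u v + N u v) = h M + h N.
Proof.
move=> Hh; have := Hh 1 M N; rewrite mul1r => <-.
by congr h; apply: fext2 => u v; rewrite mul1r.
Qed.

Lemma linF_sum (X I : finType) (h : op C X -> C) (F : I -> op C X) : linF h ->
  h (fun u v => \sum_i F i u v) = \sum_i h (F i).
Proof.
move=> Hh.
suff G : forall r : seq I, h (fun u v => \sum_(i <- r) F i u v) = \sum_(i <- r) h (F i) by apply: G.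
elim => [|i r IH].
  rewrite big_nil; transitivity (h (fun _ _ => 0)); last exact: linF0.
  congr h; apply: fext2 => u v; by rewrite big_nil.
rewrite big_cons -IH -linF_add //; congr h; apply: fext2 => u v; by rewrite big_cons.
Qed.

Lemma sum_delta (X : finType) (x0 : X) (F : X -> C) : \sum_x (x == x0)%:R * F x = F x0.
Proof.
rewrite (bigD1 x0) //= eqxx mul1r big1 ?addr0 // => x /negbTE ->; by rewrite mul0r.
Qed.

Lemma sum_delta' (X : finType) (x0 : X) (F : X -> C) : \sum_x F x * (x == x0)%:R = F x0.
Proof. rewrite -(sum_delta x0 F); apply: eq_bigr => x _; by rewrite mulrC. Qed.

Definition delta (X : finType) (x y : X) : op C X := fun u v => (u == x)%:R * (v == y)%:R.

Lemma linF_expand (X : finType) (h : op C X -> C) (M : op C X) : linF h ->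
  h M = \sum_x \sum_y M x y * h (delta x y).
Proof.
move=> Hh.
transitivity (h (fun u v => \sum_x (fun x u v => \sum_y M x y * delta x y u v) x u v)).
  congr h; apply: fext2 => u v /=.
  rewrite (bigD1 u) //= [X in _ + X]big1 => [|x xu]; last first.
    by apply: big1 => y _; rewrite /delta [u == x]eq_sym (negbTE xu) mul0r mulr0.
  rewrite addr0 /delta (bigD1 v) //= !eqxx !mul1r big1 ?addr0 ?mulr1 // => y yv.
  by rewrite [v == y]eq_sym (negbTE yv) !mulr0.
rewrite linF_sum //; apply: eq_bigr => x _.
rewrite (linF_sum (fun y u v => M x y * delta x y u v)) //; apply: eq_bigr => y _.
by rewrite linF_scale.
Qed.

Lemma form0 (X : finType) (H : X -> X -> C) :
  (forall psi : X -> C, \sum_x \sum_y psi x * (psi y)^* * H x y = 0) -> forall r s, H r s = 0.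
Proof.
move=> HQ.
pose Bf (u v : X -> C) := \sum_x \sum_y u x * (v y)^* * H x y.
have Hexp : forall u v c, \sum_x \sum_y (u x + c * v x) * (u y + c * v y)^* * H x y =
    Bf u u + c^* * Bf u v + c * Bf v u + c * c^* * Bf v v.
  move=> u v c; rewrite /Bf !mulr_sumr -!big_split /=; apply: eq_bigr => x _.
  rewrite !mulr_sumr -!big_split /=; apply: eq_bigr => y _.
  rewrite rmorphD rmorphM /=. ring.
have HB : forall u v, Bf u v = 0.
  move=> u v.
  have e1 := Hexp v u 1; have e2 := Hexp v u 'i.
  have Q0 : forall w, Bf w w = 0 by move=> w; exact: HQ.
  rewrite (HQ (fun x => v x + 1 * u x)) !Q0 rmorph1 in e1.
  rewrite (HQ (fun x => v x + 'i * u x)) !Q0 conjCi in e2.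
  have f1 : Bf v u + Bf u v = 0 by rewrite e1; ring.
  have f2 : - 'i * Bf v u + 'i * Bf u v = 0 by rewrite e2; ring.
  have : 2 * 'i * Bf u v = 0.
    transitivity ('i * (Bf v u + Bf u v) + (- 'i * Bf v u + 'i * Bf u v)); first ring.
    by rewrite f1 f2 mulr0 addr0.
  move/eqP; rewrite mulf_eq0 mulf_eq0 pnatr_eq0 (negbTE (neq0Ci C)) /=; by move/eqP.
move=> r s; have := HB (fun x => (x == r)%:R) (fun x => (x == s)%:R).
rewrite /Bf (bigD1 r) //= [X in _ + X]big1 => [|x xr]; last by apply: big1 => y _; rewrite (negbTE xr) !mul0r.
rewrite addr0 (bigD1 s) //= [X in _ + X]big1 => [|y ys]; last by rewrite (negbTE ys) rmorph0 mulr0 mul0r.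
by move=> HH; rewrite -HH addr0 !eqxx /= !mulr1n rmorph1 !mul1r.
Qed.
End S.



Section S2.
Variable C : numClosedFieldType.

Lemma psd_cong (X Y : finType) (T : Y -> X -> C) (M : op C X) :
  psd M -> psd (fun y y' => \sum_x \sum_x' T y x * M x x' * (T y' x')^*).
Proof.
move=> HM v; have := HM (fun x => \sum_y (T y x)^* * v y).
congr (_ <= _).
transitivity (\sum_x \sum_x' \sum_y \sum_y' (v y)^* * T y x * M x x' * (T y' x')^* * v y').
  apply: eq_bigr => x _; apply: eq_bigr => x' _.
  rewrite rmorph_sum /= !mulr_suml; apply: eq_bigr => y _.
  rewrite mulr_sumr; apply: eq_bigr => y' _.
  rewrite rmorphM /= cK; ring.
symmetry.
transitivity (\sum_y \sum_y' \sum_x \sum_x' (v y)^* * T y x * M x x' * (T y' x')^* * v y').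
  apply: eq_bigr => y _; apply: eq_bigr => y' _.
  rewrite mulr_sumr mulr_suml; apply: eq_bigr => x _.
  rewrite mulr_sumr mulr_suml; apply: eq_bigr => x' _; ring.
under eq_bigr => y _ do rewrite exchange_big.
rewrite [LHS]exchange_big /=; apply: eq_bigr => x _.
under eq_bigr => y _ do rewrite exchange_big.
by rewrite exchange_big.
Qed.

Lemma psd_ext (X : finType) (M N : op C X) : (forall u v, M u v = N u v) -> psd M -> psd N.
Proof. by move=> H; rewrite (fext2 H). Qed.

Lemma psd_scale (X : finType) (a : C) (M : op C X) : 0 <= a -> psd M -> psd (fun u v => a * M u v).
Proof.
move=> ha HM v; have := HM v => H0.
rewrite (_ : \sum_x \sum_y _ = a * \sum_x \sum_y (v x)^* * M x y * v y); first exact: mulr_ge0.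
rewrite mulr_sumr; apply: eq_bigr => x _; rewrite mulr_sumr; apply: eq_bigr => y _; ring.
Qed.

Lemma psd_sum (X I : finType) (F : I -> op C X) : (forall i, psd (F i)) -> psd (fun u v => \sum_i F i u v).
Proof.
move=> HF v.
rewrite (_ : \sum_x \sum_y _ = \sum_i \sum_x \sum_y (v x)^* * F i x y * v y).
  by apply: sumr_ge0 => i _; exact: HF.
rewrite [RHS]exchange_big /=; apply: eq_bigr => x _.
rewrite [RHS]exchange_big /=; apply: eq_bigr => y _.
by rewrite mulr_sumr mulr_suml.
Qed.

Lemma psd_rank1 (X : finType) (psi : X -> C) : psd (fun x y => psi x * (psi y)^*).
Proof.
move=> v.
rewrite (_ : \sum_x \sum_y _ = (\sum_x (v x)^* * psi x) * (\sum_x (v x)^* * psi x)^*).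
  exact: mul_conjC_ge0.
rewrite rmorph_sum mulr_suml; apply: eq_bigr => x _; rewrite mulr_sumr; apply: eq_bigr => y _.
rewrite rmorphM /= cK; ring.
Qed.

Lemma sum_pair (I J : finType) (F : (I * J)%type -> C) : \sum_p F p = \sum_i \sum_j F (i, j).
Proof. by rewrite pair_bigA; apply: eq_bigr => -[i j]. Qed.

Lemma sum_unit (F : unit -> C) : \sum_u F u = F tt.
Proof. by rewrite (bigD1 tt) //= big1 ?addr0 // => -[]; rewrite eqxx. Qed.

Lemma sum_unif (B : finType) : (0 < #|B|)%N -> \sum_b @unif C B b b = 1.
Proof.
move=> hB; rewrite /unif.
under eq_bigr do rewrite eqxx mul1r.
rewrite sumr_const -[X in _ *+ X]/(#|B|) -[_ *+ #|B|]mulr_natr mulVf // pnatr_eq0 -lt0n; exact: hB.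
Qed.

Lemma sum2_delta (X : finType) (x0 x0' : X) (F : X -> X -> C) (a b : C) :
  \sum_x \sum_x' a * (x == x0)%:R * F x x' * (b * (x' == x0')%:R)^* = a * F x0 x0' * b^*.
Proof.
rewrite (bigD1 x0) //= [X in _ + X]big1 => [|x /negbTE ->]; last by apply: big1 => x' _; rewrite !mulr0 !mul0r.
rewrite addr0 (bigD1 x0') //= [X in _ + X]big1 => [|x' /negbTE ->]; last by rewrite rmorphM /= conjC_nat !mulr0.
by rewrite addr0 !eqxx rmorphM /= conjC_nat !mulr1.
Qed.

Lemma unif_id_channel (A B : finType) : (0 < #|B|)%N -> channel (@unif_id C A B).
Proof.
move=> hB; split.
- move=> a M N x y; rewrite /unif_id /opT; ring.
- move=> K M HM.
  pose T (b : B) (y : (K * (B * A))%type) (x : (K * (A * unit))%type) : C :=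
    (y.2.1 == b)%:R * (x == (y.1, (y.2.2, tt)))%:R.
  have ha : 0 <= #|B|%:R^-1 :> C by rewrite invr_ge0 ler0n.
  have H1 := psd_scale ha (psd_sum (fun b => psd_cong (T b) HM)).
  apply: (psd_ext _ H1) => y y'.
  rewrite /idtens /unif_id /opT /unif /T /=.
  under eq_bigr => i _ do rewrite sum2_delta rmorph_nat.
  rewrite (_ : \sum_i _ = (y.2.1 == y'.2.1)%:R * M (y.1, (y.2.2, tt)) (y'.1, (y'.2.2, tt))); first ring.
  rewrite -(sum_delta y'.2.1 (fun i => (y.2.1 == i)%:R * M (y.1, (y.2.2, tt)) (y'.1, (y'.2.2, tt)))).
  apply: eq_bigr => i _; rewrite [i == _]eq_sym; ring.
move=> M; rewrite /tr /unif_id /opT sum_pair [RHS]sum_pair.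
under [RHS]eq_bigr do rewrite sum_unit.
rewrite -[RHS]mul1r -(sum_unif hB) mulr_suml; apply: eq_bigr => b _.
by rewrite mulr_sumr.
Qed.
End S2.

Section S3.
Variable C : numClosedFieldType.

Lemma sum4 (I J X Y : finType) (F : I -> J -> X -> Y -> C) :
  \sum_i \sum_j \sum_x \sum_y F i j x y = \sum_x \sum_y \sum_i \sum_j F i j x y.
Proof.
under eq_bigr => i _ do rewrite exchange_big /=.
under eq_bigr => i _ do under eq_bigr => x _ do rewrite exchange_big /=.
rewrite exchange_big /=; apply: eq_bigr => x _.
by rewrite exchange_big.
Qed.

Lemma sum_mid (K Y B : finType) (k : K) (b : B) (G : (K * (Y * B))%type -> C) (w : Y -> C) :
  \sum_x w x.2.1 * ((x.1 == k) && (x.2.2 == b))%:R * G x = \sum_i w i * G (k, (i, b)).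
Proof.
rewrite sum_pair (bigD1 k) //= [X in _ + X]big1 => [|k' /negbTE nk]; last first.
  by apply: big1 => -[i b'] _ /=; rewrite nk /= mulr0 mul0r.
rewrite addr0 sum_pair; apply: eq_bigr => i _ /=.
rewrite (bigD1 b) //= [X in _ + X]big1 => [|b' /negbTE nb]; last by rewrite nb andbF mulr0 mul0r.
by rewrite !eqxx addr0 /= mulr1.
Qed.

Lemma unif_id_marg (A B : finType) : (0 < #|B|)%N -> marg_unif (@unif_id C A B).
Proof.
move=> hB M p q; rewrite /unif_id /opT /ptrL /=.
by rewrite -mulr_suml sum_unif // mul1r.
Qed.

Variables (A B A' R : finType) (V : (R * A)%type -> A' -> C) (E : op C (R * B)%type -> op C B).

Lemma smaller (R' : finType) (W : R -> R' -> C) :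
  (forall i j, \sum_r (W r i)^* * W r j = (i == j)%:R) ->
  (forall r a x, \sum_r' (\sum_i W r i * (W r' i)^*) * V (r',a) x = V (r,a) x) ->
  is_isometry V -> channel E -> std_form V E -> (#|R| <= #|R'|)%N.
Proof.
move=> HW HP HV [EL ECP ETP] Hstd.
pose V' : (R' * A)%type -> A' -> C := fun p x => \sum_r (W r p.1)^* * V (r, p.2) x.
pose E' : op C (R' * B)%type -> op C B := fun X =>
  E (fun p q => \sum_i \sum_j W p.1 i * X (i,p.2) (j,q.2) * (W q.1 j)^*).
have HV' : forall r a x, \sum_i W r i * V' (i, a) x = V (r, a) x.
  move=> r a x; rewrite -[RHS]HP /V' /=.
  under eq_bigr do rewrite mulr_sumr.
  rewrite exchange_big /=; apply: eq_bigr => r' _; rewrite mulr_suml.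
  by apply: eq_bigr => i _; rewrite mulrA.
have HW' : forall i j, \sum_r W r i * (W r j)^* = (i == j)%:R.
  move=> i j; rewrite -(conjC_nat C) -HW rmorph_sum; apply: eq_bigr => r _.
  by rewrite rmorphM /= cK.
have H := Hstd R' V' E'; apply: H.
- move=> x1 x2; rewrite -HV sum_pair [RHS]sum_pair.
  transitivity (\sum_i \sum_a \sum_r W r i * (V (r,a) x1)^* * V' (i,a) x2).
    apply: eq_bigr => i _; apply: eq_bigr => a _.
    rewrite {1}/V' rmorph_sum mulr_suml; apply: eq_bigr => r _; by rewrite rmorphM /= cK.
  symmetry; under eq_bigr => r _ do under eq_bigr => a _ do rewrite -[V _ x2]HV' mulr_sumr.
  rewrite exchange_big /=.
  under eq_bigr => a _ do rewrite exchange_big /=.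
  rewrite exchange_big /=.
  apply: eq_bigr => i _; apply: eq_bigr => a _; apply: eq_bigr => r _; ring.
- split.
  + move=> a M N x y; rewrite /E'.
    transitivity (E (fun p q => a * (\sum_i \sum_j W p.1 i * M (i,p.2) (j,q.2) * (W q.1 j)^*) +
       \sum_i \sum_j W p.1 i * N (i,p.2) (j,q.2) * (W q.1 j)^*) x y); last exact: EL.
    congr (E _ x y); apply: fext2 => p q; rewrite mulr_sumr -big_split; apply: eq_bigr => i _.
    rewrite mulr_sumr -big_split; apply: eq_bigr => j _ /=; ring.
  + move=> K M HM.
    change (psd (idtens E (fun y y' => \sum_i \sum_j W y.2.1 i * M (y.1,(i,y.2.2)) (y'.1,(j,y'.2.2)) * (W y'.2.1 j)^*))).
    apply: ECP.
    pose T (y : (K * (R * B))%type) (x : (K * (R' * B))%type) := W y.2.1 x.2.1 * ((x.1 == y.1) && (x.2.2 == y.2.2))%:R.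
    apply: (psd_ext _ (psd_cong T HM)) => y y'.
    under eq_bigr => x _ do (under eq_bigr => x' _ do rewrite -mulrA; rewrite -mulr_sumr).
    rewrite /T sum_mid; apply: eq_bigr => i _.
    under eq_bigr => x' _ do rewrite rmorphM /= conjC_nat mulrCA mulrC.
    rewrite mulr_sumr.
    transitivity (\sum_x' (W y'.2.1 x'.2.1)^* * ((x'.1 == y'.1) && (x'.2.2 == y'.2.2))%:R *
       (W y.2.1 i * M (y.1, (i, y.2.2)) x')).
      by apply: eq_bigr => x' _; ring.
    rewrite (sum_mid y'.1 y'.2.2 (fun x' => W y.2.1 i * M (y.1, (i, y.2.2)) x') (fun j => (W y'.2.1 j)^*)).
    apply: eq_bigr => j _ /=; ring.
  + move=> X; rewrite /E' ETP /tr sum_pair [RHS]sum_pair.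
    rewrite exchange_big [RHS]exchange_big /=; apply: eq_bigr => b _.
    rewrite exchange_big /=; apply: eq_bigr => i _.
    rewrite exchange_big /=.
    rewrite -(sum_delta i (fun j => X (i, b) (j, b))) /=.
    apply: eq_bigr => j _; rewrite eq_sym -HW' mulr_suml; apply: eq_bigr => r _ /=; ring.
- move=> N NL M x y; rewrite /superch /E'.
  congr (E _ x y); apply: fext2 => -[r b] -[r' b'] /=.
  rewrite /idtens /=.
  pose h := fun Z => N Z b b'.
  have hL : linF h by exact: linF_of.
  transitivity (h (fun a a' => \sum_i (fun i a a' => \sum_j (W r i * (W r' j)^*) * isoch V' M (i,a) (j,a')) i a a')).
    rewrite linF_sum //; apply: eq_bigr => i _.
    rewrite (linF_sum (fun j a a' => (W r i * (W r' j)^*) * isoch V' M (i,a) (j,a'))) //.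
    apply: eq_bigr => j _; rewrite linF_scale // /h; ring.
  rewrite /h; congr (N _ b b'); apply: fext2 => a a' /=.
  rewrite /isoch.
  transitivity (\sum_x1 \sum_x2 \sum_i \sum_j W r i * V' (i,a) x1 * M x1 x2 * ((W r' j)^* * (V' (j,a') x2)^*)).
    rewrite -sum4; apply: eq_bigr => i _; apply: eq_bigr => j _; rewrite mulr_sumr; apply: eq_bigr => x1 _.
    rewrite mulr_sumr; apply: eq_bigr => x2 _; ring.
  apply: eq_bigr => x1 _; apply: eq_bigr => x2 _.
  rewrite -[V (r,a) x1]HV' -[V (r',a') x2]HV' rmorph_sum mulr_suml mulr_suml; apply: eq_bigr => i _.
  rewrite [RHS]mulr_sumr; apply: eq_bigr => j _; rewrite rmorphM /=; ring.
Qed.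
End S3.



Section S4.
Variable C : numClosedFieldType.

Lemma householder (R : finType) (w : R -> C) (r0 : R) : w r0 != 0 ->
  exists (H : R -> R -> C) (mu : C),
   [/\ forall a b, (H a b)^* = H b a,
       forall a b, \sum_t H a t * H t b = (a == b)%:R,
       forall a, H a r0 = - mu * w a &
       mu * mu^* * \sum_t w t * (w t)^* = 1].
Proof.
move=> w0.
set s := \sum_t w t * (w t)^*.
set q := w r0 * (w r0)^*.
have q0 : 0 < q by rewrite lt_def mul_conjC_ge0 andbT mulf_neq0 // conjC_eq0.
have sq : q <= s.
  rewrite /s (bigD1 r0) //= lerDl; apply: sumr_ge0 => t _; exact: mul_conjC_ge0.
have s0 : 0 < s by apply: lt_le_trans sq.
set d := sqrtC (q * s).
have d0 : 0 < d by rewrite sqrtC_gt0 mulr_gt0.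
have dc : d^* = d by apply: geC0_conj; apply: ltW.
have dd : d * d = q * s by rewrite -expr2 sqrtCK.
set mu := (w r0)^* / d.
set rho := mu * w r0.
have rhoE : rho = q / d by rewrite /rho /mu /q; field; rewrite lt0r_neq0.
have rho0 : 0 <= rho by rewrite rhoE divr_ge0 // ltW.
have rhoc : rho^* = rho by apply: geC0_conj.
have dn : d != 0 by rewrite lt0r_neq0.
have mus : mu * mu^* * s = 1.
  rewrite /mu rmorphM /= fmorphV /= dc cK.
  transitivity ((q * s) / (d * d)); first by rewrite /q; field.
  by rewrite dd divff // mulf_neq0 // lt0r_neq0.
pose z t := (t == r0)%:R + mu * w t.
pose nz := \sum_t z t * (z t)^*.
have nzE : nz = 2 + 2 * rho.
  rewrite /nz /z.
  transitivity (\sum_t ((t == r0)%:R + ((t == r0)%:R * (mu * w t)^* + (t == r0)%:R * (mu * w t)) + mu * mu^* * (w t * (w t)^*))).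
    by apply: eq_bigr => t _; rewrite rmorphD /= conjC_nat rmorphM /=; case: (t == r0) => /=; ring.
  rewrite big_split /= big_split /= big_split /= -mulr_sumr.
  have sd1 : \sum_t (t == r0)%:R = 1 :> C.
    transitivity (\sum_t (t == r0)%:R * (1 : C)); first by apply: eq_bigr => t _; rewrite mulr1.
    exact: (sum_delta r0 (fun _ => 1)).
  rewrite sd1 -/s mus !sum_delta -/rho rhoc; ring.
have rho1 : 1 + rho != 0 by rewrite lt0r_neq0 // ltr_pwDl.
have nz0 : nz != 0 by rewrite nzE (_ : 2 + 2 * rho = 2 * (1 + rho)); [rewrite mulf_neq0 // pnatr_eq0 | ring].
pose beta := 2 / nz.
have betac : beta^* = beta.
  by rewrite /beta fmorph_div /= conjC_nat nzE rmorphD rmorphM /= rhoc conjC_nat.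
have betanz : beta * nz = 2 by rewrite /beta mulrVK ?unitfE.
pose H a b := (a == b)%:R - beta * z a * (z b)^*.
exists H, mu; split.
- move=> a b; rewrite /H rmorphB rmorphM rmorphM /= conjC_nat betac cK eq_sym; ring.
- move=> a b.
  have Hz : \sum_t (z t)^* * H t b = - (z b)^*.
    rewrite /H; under eq_bigr => t _ do rewrite mulrBr.
    rewrite sumrB sum_delta'.
    rewrite (_ : \sum_t _ = beta * nz * (z b)^*); first by rewrite betanz; ring.
    rewrite /nz mulr_sumr mulr_suml; apply: eq_bigr => t _; ring.
  transitivity (\sum_t (t == a)%:R * H t b - beta * z a * \sum_t (z t)^* * H t b).
    rewrite mulr_sumr -sumrB; apply: eq_bigr => t _; rewrite /H eq_sym; ring.
  by rewrite Hz sum_delta /H; ring.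
- move=> a; rewrite /H /z eqxx /= -/rho rmorphD /= rhoc conjC_nat /beta nzE.
  field; rewrite (_ : 2 + 2 * rho = 2 * (1 + rho)); [rewrite mulf_neq0 // pnatr_eq0 | ring].
- by [].
- exact: mus.
Qed.
End S4.

Section S5.
Variable C : numClosedFieldType.
Variables (A B A' R : finType) (V : (R * A)%type -> A' -> C) (E : op C (R * B)%type -> op C B).

Lemma no_orth (w : R -> C) (r0 : R) : is_isometry V -> channel E -> std_form V E ->
  w r0 != 0 -> (forall a x, \sum_r (w r)^* * V (r,a) x = 0) -> False.
Proof.
move=> HV HE Hstd w0 Hw.
have [H [mu [Hh HH Hr0 Hmu]]] := householder w0.
pose W (r : R) (i : {x in predC1 r0}) := H r (val i).
have := smaller (W := W) _ _ HV HE Hstd.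
rewrite card_sig cardC1.
have Rpos : (0 < #|R|)%N by apply/card_gt0P; exists r0.
move=> Hs.
have : (#|R| <= #|R|.-1)%N; last by case: #|R| Rpos => // n _ /=; rewrite ltnn.
apply: Hs.
- move=> i j; rewrite /W.
  under eq_bigr do rewrite Hh.
  by rewrite HH val_eqE.
- move=> r a x.
  have inner : forall r', \sum_i W r i * (W r' i)^* = (r == r')%:R - mu * mu^* * w r * (w r')^*.
    move=> r'; rewrite /W.
    under eq_bigr do rewrite Hh.
    rewrite -(big_sub (predC1 r0) (fun t => H r t * H t r')).
    have := HH r r'; rewrite (bigD1 r0) //= => <-.
    rewrite -(Hh r' r0) !Hr0 rmorphM rmorphN /=.
    rewrite (eq_bigl (fun t => t != r0)) //; ring.
  under eq_bigr do rewrite inner mulrBl.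
  rewrite sumrB.
  under eq_bigr do rewrite eq_sym.
  rewrite sum_delta (_ : \sum_r' _ = mu * mu^* * w r * \sum_r' (w r')^* * V (r', a) x).
    by rewrite Hw mulr0 subr0.
  rewrite mulr_sumr; apply: eq_bigr => r' _; ring.
Qed.
End S5.



Section S6.
Variable C : numClosedFieldType.

Lemma lin_zero_of_forms (X : finType) (h : op C X -> C) : linF h ->
  (forall psi : X -> C, h (fun x y => psi x * (psi y)^*) = 0) -> forall M, h M = 0.
Proof.
move=> hl Hq M; rewrite linF_expand //; apply: big1 => x _; apply: big1 => y _.
rewrite (form0 (H := fun x y => h (delta C x y))) ?mulr0 // => psi.
transitivity (h (fun x y => psi x * (psi y)^*)); last exact: Hq.
by rewrite [RHS]linF_expand.
Qed.

Lemma lin_density_zero (X : finType) (h : op C X -> C) : linF h ->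
  (forall tau, density tau -> h tau = 0) -> forall M, h M = 0.
Proof.
move=> hl Hd; apply: lin_zero_of_forms => // psi.
set n := \sum_x psi x * (psi x)^*.
have n_ge0 : 0 <= n by apply: sumr_ge0 => x _; exact: mul_conjC_ge0.
case: (eqVneq n 0) => [n0 | nn0].
  have p0 : forall x, psi x = 0.
    move=> x; have := @psumr_eq0P _ _ xpredT (fun i => psi i * (psi i)^*) (fun i _ => mul_conjC_ge0 (psi i)) n0 x isT.
    by move/eqP; rewrite mulf_eq0 conjC_eq0 orbb => /eqP.
  rewrite (_ : (fun x y => _) = (fun _ _ => 0)); first exact: linF0.
  by apply: fext2 => x y; rewrite p0 mul0r.
have Htau : density (fun x y => n^-1 * (psi x * (psi y)^*)).
  split; first by apply: psd_scale; [rewrite invr_ge0 | exact: psd_rank1].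
  by rewrite /tr -mulr_sumr mulVf.
have := Hd _ Htau; rewrite linF_scale // => /eqP.
by rewrite mulf_eq0 invr_eq0 (negbTE nn0) /= => /eqP.
Qed.

Lemma cu_trace (R B : finType) (E : op C (R * B)%type -> op C B) :
  (0 < #|B|)%N -> is_linear E -> cond_unital E ->
  forall X b b', E (opT X (@unif C B)) b b' = tr X * @unif C B b b'.
Proof.
move=> hB EL Hcu X b b'; apply/eqP; rewrite -subr_eq0; apply/eqP.
pose h := fun X => E (opT X (@unif C B)) b b' - tr X * @unif C B b b'.
have hl : linF h.
  move=> a M N; rewrite /h.
  rewrite (_ : opT _ _ = fun p q => a * opT M (@unif C B) p q + opT N (@unif C B) p q).
    rewrite EL /tr big_split /= -mulr_sumr; ring.
  by apply: fext2 => p q; rewrite /opT; ring.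
apply: (lin_density_zero hl) => tau Ht; rewrite /h Hcu //.
by case: Ht => _ ->; rewrite mul1r subrr.
Qed.
End S6.



Section S7.
Variable C : numClosedFieldType.
Variables (A B A' R : finType) (V : (R * A)%type -> A' -> C) (E : op C (R * B)%type -> op C B).

Lemma superext_unif M b c b' c' :
  superext V E (@unif_id C A B) M (b, c) (b', c') =
  E (opT (fun r r' => \sum_x1 \sum_x2 V (r, c) x1 * M (x1, tt) (x2, tt) * (V (r', c') x2)^*) (@unif C B)) b b'.
Proof.
rewrite /superext /tensid /assocRL /idtens /assocLR /unif_id /isoch /opT /=.
by congr (E _ b b'); apply: fext2 => -[r be] -[r' be'] /=; rewrite mulrC.
Qed.

Lemma superext_mu (C0 C1 : finType) (N : op C (A * C0)%type -> op C (B * C1)%type) :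
  marg_unif N -> forall M b c1 b' c1',
  superext V E N M (b, c1) (b', c1') =
  E (opT (fun r r' => ptrL (N (fun ac ac' => tensid (isoch V) M ((r, ac.1), ac.2) ((r', ac'.1), ac'.2))) c1 c1')
     (@unif C B)) b b'.
Proof.
move=> HN M b c1 b' c1'.
rewrite /superext /tensid /assocRL /idtens /assocLR /=.
congr (E _ b b'); apply: fext2 => -[r be] -[r' be'] /=.
by rewrite HN /opT /= mulrC.
Qed.

Lemma trE (Y : op C R) : (0 < #|B|)%N -> TP E -> \sum_be E (opT Y (@unif C B)) be be = tr Y.
Proof.
move=> hB ETP; have := ETP (opT Y (@unif C B)); rewrite /tr => ->.
rewrite sum_pair; apply: eq_bigr => r _; rewrite /opT /= -mulr_sumr sum_unif // mulr1 //.
Qed.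

End S7.

Theorem theorem11 (C : numClosedFieldType) (A B A' R : finType)
  (V : (R * A)%type -> A' -> C) (E : op C (R * B)%type -> op C B) :
  (0 < #|A|)%N -> (0 < #|B|)%N -> (0 < #|A'|)%N ->
  is_isometry V -> channel E -> std_form V E ->
  (compl_unif_pres V E <-> marg_unif (superext V E (@unif_id C A B)))
  /\ (marg_unif (superext V E (@unif_id C A B)) <-> cond_unital E).
Proof.
move=> hA hB hA' HV HE Hstd.
have [EL ECP ETP] := HE.
have P12 : compl_unif_pres V E -> marg_unif (superext V E (@unif_id C A B)).
  by move=> H; apply: H; [exact: unif_id_channel | exact: unif_id_marg].
have P31 : cond_unital E -> compl_unif_pres V E.
  move=> Hcu C0 C1 N HN Hmu M [b c1] [b' c1'].
  rewrite superext_mu // cu_trace // /opT /ptrL /=.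
  under eq_bigr => be _ do rewrite superext_mu // cu_trace //.
  by rewrite -mulr_sumr sum_unif // mulr1 mulrC.
have P23 : marg_unif (superext V E (@unif_id C A B)) -> cond_unital E.
  move=> H2.
  pose kv (i : 'I_#|{: (A * A')%type}|) (r : R) := V (r, (enum_val i).1) (enum_val i).2.
  have Hk : forall i i' b b', E (opT (fun r r' => kv i r * (kv i' r')^*) (@unif C B)) b b' =
       tr (fun r r' => kv i r * (kv i' r')^*) * @unif C B b b'.
    move=> i i' b b'.
    pose M0 : op C (A' * unit)%type := fun p q => (p.1 == (enum_val i).2)%:R * (q.1 == (enum_val i').2)%:R.
    have eY : (fun r r' => \sum_x1 \sum_x2 V (r, (enum_val i).1) x1 * M0 (x1, tt) (x2, tt) * (V (r', (enum_val i').1) x2)^*)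
        = (fun r r' => kv i r * (kv i' r')^*).
      apply: fext2 => r r'; rewrite /M0 /kv /=.
      transitivity (\sum_x1 (x1 == (enum_val i).2)%:R * (V (r, (enum_val i).1) x1 *
           \sum_x2 (x2 == (enum_val i').2)%:R * (V (r', (enum_val i').1) x2)^*)).
        apply: eq_bigr => x1 _; rewrite !mulr_sumr; apply: eq_bigr => x2 _; ring.
      by rewrite sum_delta sum_delta.
    have := H2 M0 (b, (enum_val i).1) (b', (enum_val i').1).
    rewrite superext_unif eY /opT /ptrL /=.
    under eq_bigr => be _ do rewrite superext_unif eY.
    by rewrite trE // mulrC.
  have span : forall r, exists alpha : 'I_#|{: (A * A')%type}| -> C,
      forall t, (t == r)%:R = \sum_i alpha i * kv i t.
    pose Kmx : 'M[C]_(#|{: (A * A')%type}|, #|{: R}|) := \matrix_(i, j) kv i (enum_val j).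
    case: (boolP (row_full Kmx)) => Hfull.
    - move=> r.
      have /submxP [D HD] := submx_full (delta_mx 0 (enum_rank r) : 'M[C]_(1, #|{: R}|)) Hfull.
      exists (fun i => D 0 i) => t.
      move/matrixP: HD => /(_ 0 (enum_rank t)).
      rewrite !mxE /= (inj_eq enum_rank_inj) => ->.
      by apply: eq_bigr => i _; rewrite mxE enum_rankK.
    - exfalso.
      have rk : (\rank Kmx < #|{: R}|)%N by rewrite ltn_neqAle rank_leq_col andbT.
      pose K := kermx Kmx^T.
      have rK : \rank K = (#|{: R}| - \rank Kmx)%N by rewrite mxrank_ker mxrank_tr.
      have [i0 [j0 nz]] : exists i0 j0, K i0 j0 != 0.
        case: (boolP [exists i0, exists j0, K i0 j0 != 0]) => [/existsP [i0 /existsP [j0 Hij]]|Hn].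
          by exists i0, j0.
        have K0 : K = 0.
          apply/matrixP => i j; apply/eqP; rewrite [X in _ == X]mxE.
          move: Hn; rewrite negb_exists => /forallP /(_ i); rewrite negb_exists => /forallP /(_ j).
          by rewrite negbK.
        move: rK; rewrite K0 mxrank0 => /esym/eqP; rewrite subn_eq0 leqNgt rk.
        done.
      have Hu : forall i2, \sum_j K i0 j * Kmx i2 j = 0.
        move=> i2; transitivity ((kermx Kmx^T *m Kmx^T) i0 i2); last by rewrite mulmx_ker mxE.
        rewrite [RHS]mxE; by apply: eq_bigr => j _; rewrite [Kmx^T _ _]mxE.
      apply: (@no_orth C A B A' R V E (fun t => (K i0 (enum_rank t))^*) (enum_val j0) HV HE Hstd).
      + by rewrite enum_valK conjC_eq0.
      + move=> a x; rewrite -[RHS](Hu (enum_rank (a, x))).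
        rewrite (reindex (@enum_rank R)) /=; last by apply: onW_bij; exact: enum_rank_bij.
        by apply: eq_bigr => r _; rewrite cK /Kmx [X in _ = _ * X]mxE /kv !enum_rankK.
  move=> tau Htau b b'.
  pose h := fun X => E (opT X (@unif C B)) b b' - tr X * @unif C B b b'.
  have hl : linF h.
    move=> a M N; rewrite /h.
    rewrite (_ : opT _ _ = fun p q => a * opT M (@unif C B) p q + opT N (@unif C B) p q).
      rewrite EL /tr big_split /= -mulr_sumr; ring.
    by apply: fext2 => p q; rewrite /opT; ring.
  have hrs : forall r s, h (delta C r s) = 0.
    move=> r s.
    have [al Hal] := span r; have [be Hbe] := span s.
    transitivity (h (fun u v => \sum_i (fun i u v => \sum_i' (al i * (be i')^*) * (kv i u * (kv i' v)^*)) i u v)).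
      congr h; apply: fext2 => u v; rewrite /delta Hal -[(v == s)%:R]conjC_nat Hbe rmorph_sum mulr_suml; apply: eq_bigr => i _.
      rewrite mulr_sumr; apply: eq_bigr => i' _; rewrite rmorphM /=; ring.
    rewrite linF_sum //; apply: big1 => i _.
    rewrite (linF_sum (fun i' u v => (al i * (be i')^*) * (kv i u * (kv i' v)^*))) //; apply: big1 => i' _.
    by rewrite (linF_scale _ (fun u v => kv i u * (kv i' v)^*)) // /h Hk subrr mulr0.
  have hz : h tau = 0.
    by rewrite (linF_expand tau hl); apply: big1 => r _; apply: big1 => s _; rewrite hrs mulr0.
  move: hz; rewrite /h; case: Htau => _ ->; rewrite mul1r => /eqP; rewrite subr_eq0 => /eqP //.
split; split => //.
- by move=> h2; apply: P31; apply: P23.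
- by move=> h3; apply: P12; apply: P31.
Qed.
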